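(* Let $F$ be a nondyadic nonarchimedean local field, $A$ a quaternion $F$-algebra, and $\mathcal O$ a Bass $O_F$-order in $A$ with Eichler invariant $e(\mathcal O)=0$. Then $\mathrm{Nr}(\mathcal O^\times)=O_F^{\times2}$.
   Context: Nondyadic means the residue characteristic is not $2$. An order is Gorenstein if its trace dual is projective as a left $\mathcal O$-module, and Bass if every overorder (including itself) is Gorenstein. With $\mathfrak k$ the residue field, the Eichler invariant of $\mathcal O\not\simeq M_2(O_F)$ is $1,0,-1$ according as $\mathcal O/J(\mathcal O)$ ($J$ = Jacobson radical) is $\mathfrak k\times\mathfrak k$, $\mathfrak k$, or the quadratic field extension of $\mathfrak k$. $\mathrm{Nr}$ is the reduced norm. *)

(* Defs.v *)
From HB Require Import structures.
From mathcomp Require Import all_boot all_order all_algebra.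
Set Implicit Arguments. Unset Strict Implicit. Unset Printing Implicit Defensive.
Import Order.TTheory GRing.Theory Num.Theory.
Local Open Scope ring_scope.

(* v : F -> int (the value at 0 is irrelevant and never used).          *)
Section Valuation.
Variables (F : fieldType) (v : F -> int).

Definition is_dvaluation : Prop :=
  [/\ (forall x y : F, x != 0 -> y != 0 -> v (x * y) = v x + v y),
      (forall x y : F, x != 0 -> y != 0 -> x + y != 0 ->
          Num.min (v x) (v y) <= v (x + y))
    & (exists pi : F, pi != 0 /\ v pi = 1)].

Definition in_OF (x : F) : Prop := x = 0 \/ 0 <= v x.
Definition in_pF (x : F) : Prop := x = 0 \/ 1 <= v x.
Definition OF_unit (x : F) : Prop := x != 0 /\ v x = 0.

Definition vclose (x y : F) (N : int) : Prop := x = y \/ N <= v (x - y).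

Definition v_cauchy (s : nat -> F) : Prop :=
  forall N : int, exists M : nat, forall m n, (M <= m)%N -> (M <= n)%N ->
    vclose (s m) (s n) N.

Definition v_complete : Prop :=
  forall s : nat -> F, v_cauchy s ->
    exists l : F, forall N : int, exists M : nat, forall n, (M <= n)%N ->
      vclose (s n) l N.

Definition finite_residue_field : Prop :=
  exists r : seq F, (forall y, y \in r -> in_OF y) /\
    forall x, in_OF x -> exists2 y, y \in r & in_pF (x - y).

Definition nonarch_local_field : Prop :=
  [/\ is_dvaluation, v_complete & finite_residue_field].

(* nondyadic: the residue characteristic is not 2, i.e. 2 is not in p_F *)
Definition nondyadic : Prop := ~ in_pF 2%:R.

End Valuation.

(* The quaternion algebra (a,b | F): basis 1,i,j,k=ij with i^2 = a,   *)
(* j^2 = b, ji = -ij (char F <> 2).  Elements are rows of coordinates.  *)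
Section Quaternion.
Variables (F : fieldType) (a b : F).

Notation A := 'rV[F]_4.

Definition qc (x : A) (n : nat) : F := x 0 (inord n).
Definition mkq (x0 x1 x2 x3 : F) : A := \row_(i < 4) [:: x0; x1; x2; x3]`_i.

Definition qone : A := mkq 1 0 0 0.

Definition qmul (x y : A) : A :=
  mkq (qc x 0 * qc y 0 + a * qc x 1 * qc y 1 + b * qc x 2 * qc y 2
         - a * b * qc x 3 * qc y 3)
      (qc x 0 * qc y 1 + qc x 1 * qc y 0 - b * qc x 2 * qc y 3
         + b * qc x 3 * qc y 2)
      (qc x 0 * qc y 2 + qc x 2 * qc y 0 + a * qc x 1 * qc y 3
         - a * qc x 3 * qc y 1)
      (qc x 0 * qc y 3 + qc x 3 * qc y 0 + qc x 1 * qc y 2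
         - qc x 2 * qc y 1).

Definition qconj (x : A) : A := mkq (qc x 0) (- qc x 1) (- qc x 2) (- qc x 3).

Definition nrd (x : A) : F := qc (qmul x (qconj x)) 0.
Definition trd (x : A) : F := qc (x + qconj x) 0.

Variable v : F -> int.

Definition is_lattice (O : A -> Prop) : Prop :=
  exists n (g : 'I_n -> A),
    (forall x, O x <-> exists c : 'I_n -> F,
        (forall i, in_OF v (c i)) /\ x = \sum_(i < n) c i *: g i) /\
    (forall x, exists c : 'I_n -> F, x = \sum_(i < n) c i *: g i).

Definition is_order (O : A -> Prop) : Prop :=
  [/\ is_lattice O, O qone
    & forall x y, O x -> O y -> O (qmul x y)].

Definition trace_dual (O : A -> Prop) (x : A) : Prop :=
  forall y, O y -> in_OF v (trd (qmul x y)).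

(* M (a subset of A stable under left multiplication by O) is a projective
   left O-module: it is a direct summand of a free module O^n, given as
   a split surjection  O^n -> M, c |-> sum c_i m_i,  with left O-linear
   section  g : M -> O^n. *)
Definition left_projective (O M : A -> Prop) : Prop :=
  exists n (m : 'I_n -> A) (g : 'I_n -> A -> A),
    [/\ (forall i, M (m i)),
        (forall i x, M x -> O (g i x)),
        (forall i r s x y, O r -> O s -> M x -> M y ->
            g i (qmul r x + qmul s y) = qmul r (g i x) + qmul s (g i y))
      & (forall x, M x -> x = \sum_(i < n) qmul (g i x) (m i))].

Definition Gorenstein (O : A -> Prop) : Prop :=
  left_projective O (trace_dual O).

Definition Bass (O : A -> Prop) : Prop :=
  forall O' : A -> Prop, is_order O' -> (forall x, O x -> O' x) ->
    Gorenstein O'.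

Definition left_ideal (O L : A -> Prop) : Prop :=
  [/\ (forall x, L x -> O x), L 0,
      (forall x y, L x -> L y -> L (x - y))
    & (forall r x, O r -> L x -> L (qmul r x))].

Definition max_left_ideal (O L : A -> Prop) : Prop :=
  [/\ left_ideal O L, (exists x, O x /\ ~ L x)
    & forall L', left_ideal O L' -> (forall x, L x -> L' x) ->
        (forall x, L' x <-> L x) \/ (forall x, L' x <-> O x)].

Definition jacobson (O : A -> Prop) (x : A) : Prop :=
  O x /\ forall L, max_left_ideal O L -> L x.

Definition order_unit (O : A -> Prop) (x : A) : Prop :=
  O x /\ exists y, O y /\ qmul x y = qone /\ qmul y x = qone.

Definition integral_mx (M : 'M[F]_2) : Prop := forall i j, in_OF v (M i j).

Definition iso_M2 (O : A -> Prop) : Prop :=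
  exists phi : A -> 'M[F]_2,
    [/\ (forall x, O x -> integral_mx (phi x)),
        (forall M, integral_mx M -> exists2 x, O x & phi x = M),
        (forall x y, O x -> O y -> phi x = phi y -> x = y)
      & (forall x y, O x -> O y -> phi (x + y) = phi x + phi y)] /\
    (forall x y, O x -> O y -> phi (qmul x y) = phi x *m phi y) /\
    phi qone = 1%:M.

(* Eichler invariant e(O) = 0: O is not isomorphic to M_2(O_F) and
   O / J(O) is isomorphic to the residue field k = O_F / p_F.  Both
   quotients are expressed through surjective ring morphisms onto a
   common ring k with the prescribed kernels. *)
Definition eichler_zero (O : A -> Prop) : Prop :=
  ~ iso_M2 O /\
  exists (k : nzRingType) (red : F -> k) (psi : A -> k),
    [/\
        (forall x y, in_OF v x -> in_OF v y -> red (x + y) = red x + red y),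
        (forall x y, in_OF v x -> in_OF v y -> red (x * y) = red x * red y),
        red 1 = 1,
        (forall t, exists2 x, in_OF v x & red x = t)
      & (forall x, in_OF v x -> (red x = 0 <-> in_pF v x))] /\
    [/\
        (forall x y, O x -> O y -> psi (x + y) = psi x + psi y),
        (forall x y, O x -> O y -> psi (qmul x y) = psi x * psi y),
        psi qone = 1,
        (forall t, exists2 x, O x & psi x = t)
      & (forall x, O x -> (psi x = 0 <-> jacobson O x))].

End Quaternion.

(* Main.v *)
Require Import Defs.
From HB Require Import structures.
From mathcomp Require Import all_boot all_order all_algebra.
From mathcomp Require Import ring zify boolp.
Set Implicit Arguments. Unset Strict Implicit. Unset Printing Implicit Defensive.
Import Order.TTheory GRing.Theory Num.Theory.
Local Open Scope ring_scope.


Section Q.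
Variables (F : fieldType) (a b : F).
Local Notation A := 'rV[F]_4.

Lemma qc0 (x0 x1 x2 x3 : F) : qc (mkq x0 x1 x2 x3) 0 = x0.
Proof. by rewrite /qc /mkq mxE inordK. Qed.
Lemma qc1 (x0 x1 x2 x3 : F) : qc (mkq x0 x1 x2 x3) 1 = x1.
Proof. by rewrite /qc /mkq mxE inordK. Qed.
Lemma qc2 (x0 x1 x2 x3 : F) : qc (mkq x0 x1 x2 x3) 2 = x2.
Proof. by rewrite /qc /mkq mxE inordK. Qed.
Lemma qc3 (x0 x1 x2 x3 : F) : qc (mkq x0 x1 x2 x3) 3 = x3.
Proof. by rewrite /qc /mkq mxE inordK. Qed.
Lemma qcD (x y : A) n : qc (x + y) n = qc x n + qc y n.
Proof. by rewrite /qc mxE. Qed.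
Lemma qcN (x : A) n : qc (- x) n = - qc x n.
Proof. by rewrite /qc mxE. Qed.
Lemma qcB (x y : A) n : qc (x - y) n = qc x n - qc y n.
Proof. by rewrite qcD qcN. Qed.
Lemma qcZ (c : F) (x : A) n : qc (c *: x) n = c * qc x n.
Proof. by rewrite /qc mxE. Qed.
Lemma qc_0 n : qc (0 : A) n = 0.
Proof. by rewrite /qc mxE. Qed.

Lemma q_ext (x y : A) : qc x 0 = qc y 0 -> qc x 1 = qc y 1 -> qc x 2 = qc y 2 -> qc x 3 = qc y 3 -> x = y.
Proof.
move=> h0 h1 h2 h3; apply/rowP => i; rewrite -[i]inord_val.
have := ltn_ord i; rewrite /qc in h0 h1 h2 h3.
by case: (nat_of_ord i) => [|[|[|[|n]]]].
Qed.

Definition Q0 := (qc0, qc1, qc2, qc3, qcD, qcN, qcZ, qc_0).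

Local Notation qmul := (qmul a b).
Local Notation nrd := (nrd a b).
Local Notation qone := (@qone F).

Lemma qmulA (x y z : A) : qmul x (qmul y z) = qmul (qmul x y) z.
Proof. by apply: q_ext; rewrite /qmul !Q0; ring. Qed.
Lemma qmulDl (x y z : A) : qmul (x + y) z = qmul x z + qmul y z.
Proof. by apply: q_ext; rewrite /qmul !Q0; ring. Qed.
Lemma qmulDr (x y z : A) : qmul z (x + y) = qmul z x + qmul z y.
Proof. by apply: q_ext; rewrite /qmul !Q0; ring. Qed.
Lemma qmulBl (x y z : A) : qmul (x - y) z = qmul x z - qmul y z.
Proof. by apply: q_ext; rewrite /qmul !Q0; ring. Qed.
Lemma qmulBr (x y z : A) : qmul z (x - y) = qmul z x - qmul z y.
Proof. by apply: q_ext; rewrite /qmul !Q0; ring. Qed.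
Lemma qmulZl c (x y : A) : qmul (c *: x) y = c *: qmul x y.
Proof. by apply: q_ext; rewrite /qmul !Q0; ring. Qed.
Lemma qmulZr c (x y : A) : qmul x (c *: y) = c *: qmul x y.
Proof. by apply: q_ext; rewrite /qmul !Q0; ring. Qed.
Lemma qmul1l (x : A) : qmul qone x = x.
Proof. by apply: q_ext; rewrite /qmul /qone !Q0; ring. Qed.
Lemma qmul1r (x : A) : qmul x qone = x.
Proof. by apply: q_ext; rewrite /qmul /qone !Q0; ring. Qed.
Lemma qmul0l (x : A) : qmul 0 x = 0.
Proof. by apply: q_ext; rewrite /qmul !Q0; ring. Qed.
Lemma qCH (x : A) : qmul x x = trd x *: x - nrd x *: qone.
Proof. by apply: q_ext; rewrite /qmul /trd /nrd /qconj /qone /qmul !(Q0, qcB); ring. Qed.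
Lemma qinv (x : A) : qmul x (trd x *: qone - x) = nrd x *: qone.
Proof. by apply: q_ext; rewrite /qmul /trd /nrd /qconj /qone /qmul !(Q0, qcB); ring. Qed.
Lemma nrdM (x y : A) : nrd (qmul x y) = nrd x * nrd y.
Proof. by rewrite /nrd /qconj /qmul !(Q0, qcB); ring. Qed.
Lemma nrd1 : nrd qone = 1.
Proof. by rewrite /nrd /qconj /qone /qmul !(Q0, qcB); ring. Qed.
Lemma nrdE (x : A) : nrd x = qc x 0 * qc x 0 - a * (qc x 1 * qc x 1) - b * (qc x 2 * qc x 2) + a * b * (qc x 3 * qc x 3).
Proof. by rewrite /nrd /qconj /qmul !(Q0, qcB); ring. Qed.
Lemma trdE (x : A) : trd x = qc x 0 + qc x 0.
Proof. by rewrite /trd /qconj !(Q0, qcB). Qed.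
Lemma trdD (x y : A) : trd (x + y) = trd x + trd y.
Proof. by rewrite !trdE !Q0; ring. Qed.
Lemma trdB (x y : A) : trd (x - y) = trd x - trd y.
Proof. by rewrite !trdE !(Q0, qcB); ring. Qed.
Lemma trdZ c (x : A) : trd (c *: x) = c * trd x.
Proof. by rewrite !trdE !Q0; ring. Qed.
Lemma trd1 : trd qone = 1 + 1.
Proof. by rewrite trdE /qone !Q0. Qed.
Lemma nrdZ c (x : A) : nrd (c *: x) = c ^+ 2 * nrd x.
Proof. by rewrite !nrdE !Q0; ring. Qed.
Lemma nrdS c (x : A) : nrd (c *: qone + x) = c ^+ 2 + c * trd x + nrd x.
Proof. by rewrite !nrdE trdE /qone !Q0; ring. Qed.
Lemma qmulS c (x : A) : qmul (c *: qone) x = c *: x.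
Proof. by rewrite qmulZl qmul1l. Qed.
Lemma qmulSS c d : qmul (c *: qone) (d *: qone) = (c * d) *: qone.
Proof. by rewrite qmulS scalerA. Qed.
Lemma qc_sum n (f : 'I_n -> A) k : qc (\sum_(i < n) f i) k = \sum_(i < n) qc (f i) k.
Proof. by rewrite /qc summxE. Qed.

End Q.


Section V.
Variables (F : fieldType) (v : F -> int).
Hypothesis hv : is_dvaluation v.
#[local] Set Default Proof Using "hv".

Definition vge (N : int) (x : F) := x = 0 \/ N <= v x.

Lemma vM x y : x != 0 -> y != 0 -> v (x * y) = v x + v y.
Proof. by case: hv => h _ _; apply: h. Qed.
Lemma vD x y : x != 0 -> y != 0 -> x + y != 0 -> Num.min (v x) (v y) <= v (x + y).
Proof. by case: hv => _ h _; apply: h. Qed.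

Lemma v1 : v 1 = 0.
Proof. have := vM (oner_neq0 F) (oner_neq0 F); rewrite mulr1 => h.
have {h} : v 1 = v 1 + v 1 := h. lia. Qed.
Lemma vN1 : v (-1) = 0.
Proof.
have h : (-1 : F) != 0 by rewrite oppr_eq0 oner_neq0.
have := vM h h; rewrite mulrNN mulr1 v1 => h'.
have {h'} : 0 = v (-1) + v (-1) := h'. lia.
Qed.
Lemma vN x : v (- x) = v x.
Proof.
have [->|x0] := eqVneq x 0; first by rewrite oppr0.
have h : (-1 : F) != 0 by rewrite oppr_eq0 oner_neq0.
by rewrite -mulN1r vM // vN1 add0r.
Qed.
Lemma vV x : x != 0 -> v x^-1 = - v x.
Proof.
move=> x0; have xi : x^-1 != 0 by rewrite invr_eq0.
have := vM x0 xi; rewrite mulfV // v1; lia.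
Qed.
Lemma vX x n : x != 0 -> v (x ^+ n) = n%:Z * v x.
Proof.
move=> x0; elim: n => [|n IH]; first by rewrite expr0 v1 mul0r.
rewrite exprS vM ?expf_neq0 // IH; lia.
Qed.

Lemma geD N x y : vge N x -> vge N y -> vge N (x + y).
Proof.
case=> [->|hx]; first by rewrite add0r.
case=> [->|hy]; first by rewrite addr0; right.
have [e|ne] := eqVneq (x + y) 0; first by left.
right; have [->|x0] := eqVneq x 0; first by rewrite add0r.
have [->|y0] := eqVneq y 0; first by rewrite addr0.
apply: le_trans (vD x0 y0 ne); by rewrite le_min hx hy.
Qed.
Lemma geN N x : vge N x -> vge N (- x).
Proof. by case=> [->|h]; [left; rewrite oppr0|right; rewrite vN]. Qed.
Lemma geB N x y : vge N x -> vge N y -> vge N (x - y).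
Proof. by move=> hx hy; apply: geD => //; apply: geN. Qed.
Lemma geM N M x y : vge N x -> vge M y -> vge (N + M) (x * y).
Proof.
case=> [->|hx]; first by rewrite mul0r; left.
case=> [->|hy]; first by rewrite mulr0; left.
have [->|x0] := eqVneq x 0; first by rewrite mul0r; left.
have [->|y0] := eqVneq y 0; first by rewrite mulr0; left.
right; rewrite vM //; lia.
Qed.
Lemma geW N M x : M <= N -> vge N x -> vge M x.
Proof. by move=> h [->|hx]; [left|right; lia]. Qed.
Lemma ge0 N : vge N 0. Proof. by left. Qed.
Lemma ge_v x : vge (v x) x. Proof. by right. Qed.
Lemma ge1 : vge 0 1. Proof. by right; rewrite v1. Qed.
Lemma ge_lim x : (forall N, vge N x) -> x = 0.
Proof. move=> h; case: (h (v x + 1)) => // h'; lia. Qed.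
Lemma not_ge1_1 : ~ vge 1 1.
Proof. by case=> [/eqP|]; [rewrite oner_eq0|rewrite v1]. Qed.

Lemma unitP x : vge 0 x -> ~ vge 1 x -> x != 0 /\ v x = 0.
Proof.
case=> [->|h] h1; first by exfalso; apply: h1; left.
have x0 : x != 0 by apply/eqP => e; apply: h1; left.
split => //; have : ~ (1 <= v x) by move=> h2; apply: h1; right.
lia.
Qed.
Lemma unit_inv x : x != 0 -> v x = 0 -> vge 0 x^-1.
Proof. by move=> x0 h; right; rewrite vV // h. Qed.
Lemma unit_ge x : x != 0 -> v x = 0 -> vge 0 x.
Proof. by move=> x0 h; right; rewrite h. Qed.
Lemma unit_not1 x : x != 0 -> v x = 0 -> ~ vge 1 x.
Proof. move=> x0 h [e|h']; [by move: x0; rewrite e eqxx| lia]. Qed.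

Lemma strict x y : x != 0 -> y != 0 -> v x < v y -> x + y != 0 /\ v (x + y) = v x.
Proof.
move=> x0 y0 lt.
have xy0 : x + y != 0.
  apply/eqP => e; have : y = - x by apply/eqP; rewrite -subr_eq0 opprK addrC e.
  by move=> ey; move: lt; rewrite ey vN; lia.
split => //.
have h1 := vD x0 y0 xy0.
have ny0 : - y != 0 by rewrite oppr_eq0.
have h2 := vD xy0 ny0; rewrite addrK vN in h2.
rewrite ge_min in h1; rewrite ge_min in h2.
move/orP: h1 => -[h1|h1]; move/orP: (h2 x0) => -[h3|h3]; lia.
Qed.

Lemma unit_plus s : vge 1 (s - 1) -> s != 0 /\ v s = 0.
Proof.
move=> h; have e : s = 1 + (s - 1) by rewrite addrC subrK.
have [e1|ne] := eqVneq (s - 1) 0.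
  by move: e; rewrite e1 addr0 => ->; rewrite oner_neq0 v1.
case: h => [/eqP|h]; first by rewrite (negbTE ne).
have := @strict 1 (s - 1) (oner_neq0 _) ne; rewrite v1 -e => -[]// ->; lia.
Qed.

End V.

Section H.
Variables (F : fieldType) (v : F -> int).
Hypotheses (hv : is_dvaluation v) (hc : v_complete v) (hnd : nondyadic v).
Local Notation vge := (vge v).
Local Notation geD := (geD hv). Local Notation geN := (geN hv). Local Notation geB := (geB hv).
Local Notation geM := (geM hv). Local Notation geW := (geW hv). Local Notation ge1 := (ge1 hv).

Lemma two_neq0 : (2 : F) != 0.
Proof. by apply/eqP => e; apply: hnd; left. Qed.
Lemma ge_half : vge 0 (2 : F)^-1.
Proof.
have h2 : vge 0 (2 : F) by rewrite -(addr0 0%R); apply: geD => //; apply: ge1.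
have [n0 e] := unitP hv h2 (fun h => hnd h).
exact: (unit_inv hv).
Qed.
Lemma ge_close x y N : vge N (x - y) -> vclose v x y N.
Proof. by case=> [/eqP|h]; [rewrite subr_eq0 => /eqP; left|right]. Qed.
Lemma close_ge x y N : vclose v x y N -> vge N (x - y).
Proof. by case=> [->|h]; [left; rewrite subrr|right]. Qed.

Fixpoint hs (w : F) n := if n is n'.+1 then hs w n' - (hs w n' ^+ 2 - w) * 2^-1 else 1.

Lemma ge_int' n m x : (n <= m)%N -> vge (Posz m) x -> vge (Posz n) x.
Proof. by move=> h; apply: geW; rewrite lez_nat. Qed.

Local Notation ge_int := (ge_int' hv).
Lemma hs_inv w : vge 1 (w - 1) -> forall n,
  vge 1 (hs w n - 1) /\ vge (Posz n.+1) (hs w n ^+ 2 - w).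
Proof.
move=> hw; elim=> [|n [IH1 IH2]] /=.
  by split; [rewrite subrr; left | rewrite expr1n -opprB; apply: geN].
set s := hs w n in IH1 IH2 *; set d := s ^+ 2 - w in IH2 *.
have hd1 : vge 1 d by apply: geW IH2; lia.
have hdh : vge (Posz n.+1) (d * 2^-1) by rewrite -(addr0 (Posz n.+1)); apply: geM => //; exact: ge_half.
split.
  have -> : s - d * 2^-1 - 1 = (s - 1) - d * 2^-1 by rewrite addrAC.
  by apply: geB => //; apply: geW hdh; lia.
have h2 : (2 : F) * 2^-1 = 1 by rewrite mulfV // two_neq0.
have -> : (s - d * 2^-1) ^+ 2 - w = d * (1 - (2 * 2^-1) * s) + (d * 2^-1) ^+ 2 by rewrite /d; ring.
rewrite h2 mul1r; apply: geD.
  have -> : Posz n.+2 = Posz n.+1 + 1 by lia.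
  by apply: geM => //; rewrite -opprB; apply: geN.
rewrite expr2; apply: (geW (N := Posz n.+1 + Posz n.+1)); first by lia.
exact: geM.
Qed.

Lemma hs_step w : vge 1 (w - 1) -> forall n, vge (Posz n.+1) (hs w n.+1 - hs w n).
Proof.
move=> hw n /=; have [_ h] := hs_inv hw n.
rewrite addrAC subrr add0r; apply: geN.
rewrite -(addr0 (Posz n.+1)); apply: geM => //; exact: ge_half.
Qed.

Lemma hs_cauchy w : vge 1 (w - 1) -> forall n m, vge (Posz n.+1) (hs w (n + m) - hs w n).
Proof.
move=> hw n; elim=> [|m IH]; first by rewrite addn0 subrr; left.
have -> : hs w (n + m.+1) - hs w n = (hs w (n + m).+1 - hs w (n + m)) + (hs w (n + m) - hs w n).
  by rewrite addnS addrA subrK.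
apply: geD => //; apply: geW (hs_step hw _); lia.
Qed.

Lemma hensel w : vge 1 (w - 1) -> exists s, vge 1 (s - 1) /\ s ^+ 2 = w.
Proof.
move=> hw.
have cs : v_cauchy v (hs w).
  move=> N; exists (absz N) => m n hm hn; apply: ge_close.
  have -> : hs w m - hs w n = (hs w (absz N + (m - absz N)) - hs w (absz N)) - (hs w (absz N + (n - absz N)) - hs w (absz N)).
    by rewrite !subnKC // opprB addrA subrK.
  by apply: geW (geB (hs_cauchy hw _ _) (hs_cauchy hw _ _)); lia.
have [l hl] := hc cs.
have hl' : forall N : int, exists M, forall n, (M <= n)%N -> vge N (hs w n - l).
  by move=> N; have [M hM] := hl N; exists M => n hn; apply: close_ge; apply: hM.
exists l; split.
  have [M hM] := hl' 1.
  have -> : l - 1 = - (hs w M - l) + (hs w M - 1) by rewrite opprB addrA subrK.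
  by apply: geD; [apply: geN; apply: hM | case: (hs_inv hw M)].
apply/eqP; rewrite -subr_eq0; apply/eqP; apply: (ge_lim hv) => N.
have [M hM] := hl' (Posz (absz N)).
set n := maxn M (absz N).
have h1 := hM n (leq_maxl _ _).
have [h2 h3] := hs_inv hw n.
have hs0 : vge 0 (hs w n).
  by rewrite -(subrK 1 (hs w n)); apply: geD; [apply: geW h2 | exact: ge1].
have -> : l ^+ 2 - w = (hs w n ^+ 2 - w) - (hs w n - l) * ((1 + 1) * hs w n - (hs w n - l)) by ring.
apply: (geW (N := Posz (absz N))); first by lia.
apply: geB; first by apply: geW h3; rewrite /n; lia.
rewrite -(addr0 (Posz (absz N))); apply: geM => //; apply: geB; last by apply: geW h1; lia.
by rewrite -(addr0 0); apply: geM => //; apply: geD; exact: ge1.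
Qed.

End H.


Section M.
Variables (F : fieldType) (v : F -> int) (a b : F) (O : 'rV[F]_4 -> Prop).
Local Notation A := 'rV[F]_4.
Hypotheses (hv : is_dvaluation v) (hnd : nondyadic v) (a0 : a != 0) (b0 : b != 0).
Variables (n : nat) (g : 'I_n -> A).
Hypothesis hO : forall x, O x <-> exists c : 'I_n -> F,
        (forall i, in_OF v (c i)) /\ x = \sum_(i < n) c i *: g i.
Local Notation qmul := (qmul a b).
Local Notation nrd := (nrd a b).
Local Notation qone := (@qone F).
Hypotheses (O1 : O qone) (OM : forall x y, O x -> O y -> O (qmul x y)).

Local Notation vge := (vge v).
Local Notation geD := (geD hv). Local Notation geN := (geN hv). Local Notation geB := (geB hv).
Local Notation geM := (geM hv). Local Notation geW := (geW hv). Local Notation ge1 := (ge1 hv).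
Local Notation unitP := (unitP hv). Local Notation unit_inv := (unit_inv hv).
Local Notation strict := (strict hv). Local Notation vN := (vN hv). Local Notation vV := (vV hv). Local Notation v1 := (v1 hv). Local Notation not_ge1_1 := (not_ge1_1 hv). Local Notation unit_plus := (unit_plus hv). Local Notation ge_lim := (ge_lim hv). Local Notation ge_v := (ge_v hv). Local Notation ge0 := (ge0 hv). Local Notation vM := (vM hv). Local Notation vX := (vX hv).
Local Notation nrdE := (nrdE a b). Local Notation nrdM := (nrdM a b).
Local Notation qmulA := (qmulA a b). Local Notation qmulBl := (qmulBl a b).
Local Notation qmulZl := (qmulZl a b). Local Notation qmul1l := (qmul1l a b).
Local Notation qCH := (qCH a b). Local Notation qmulS := (qmulS a b). Local Notation qmulSS := (qmulSS a b).
Local Notation qmulZr := (qmulZr a b). Local Notation qinv := (qinv a b). Local Notation nrdS := (nrdS a b). Local Notation nrdZ := (nrdZ a b).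
Local Notation qmulDl := (qmulDl a b). Local Notation qmulDr := (qmulDr a b). Local Notation qmulBr := (qmulBr a b). Local Notation qmul1r := (qmul1r a b). Local Notation qmul0l := (qmul0l a b). Local Notation nrd1 := (nrd1 a b).

Lemma O0 : O 0.
Proof. apply/hO; exists (fun _ => 0); split=> [i|]; first by rewrite /in_OF; left. by rewrite big1 // => i _; rewrite scale0r. Qed.
Lemma OD x y : O x -> O y -> O (x + y).
Proof.
move=> /hO[c [hc ->]] /hO[d [hd ->]]; apply/hO; exists (fun i => c i + d i); split.
  by move=> i; exact: (geD (hc i) (hd i)).
by rewrite -big_split; apply: eq_bigr => i _; rewrite scalerDl.
Qed.
Lemma OZ c x : vge 0 c -> O x -> O (c *: x).
Proof.
move=> hc' /hO[d [hd ->]]; apply/hO; exists (fun i => c * d i); split.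
  by move=> i; have := geM hc' (hd i); rewrite addr0.
by rewrite scaler_sumr; apply: eq_bigr => i _; rewrite scalerA.
Qed.
Lemma ON x : O x -> O (- x).
Proof. move=> h; rewrite -scaleN1r; apply: OZ h; apply: geN; exact: ge1. Qed.
Lemma OB x y : O x -> O y -> O (x - y).
Proof. by move=> hx hy; apply: OD hx (ON hy). Qed.
Lemma OS c : vge 0 c -> O (c *: qone).
Proof. by move=> h; apply: OZ. Qed.

Lemma seq_bound (s : seq F) : exists D : int, 0 <= D /\ forall x, x \in s -> vge (- D) x.
Proof.
elim: s => [|y s [D [D0 hD]]]; first by exists 0.
exists (D + `|v y|); split; first by lia.
move=> x; rewrite inE => /orP[/eqP ->|hx]; first by right; lia.
by apply: (geW _ (hD _ hx)); lia.
Qed.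

Lemma coord_bound : exists D : int, 0 <= D /\
  forall y, O y -> forall kk, (kk < 4)%N -> vge (- D) (qc y kk).
Proof.
have [D [D0 hD]] := seq_bound [seq qc (g i) kk | i <- enum 'I_n, kk <- iota 0 4].
exists D; split => // y /hO[c [hc ->]] kk hk.
rewrite qc_sum; apply big_ind; [exact: ge0 | exact: geD | move=> i _].
rewrite qcZ -(add0r (- D)); apply: geM; first exact: hc. apply: hD.
by apply: allpairs_f; rewrite ?mem_enum ?mem_iota.
Qed.

Lemma nt_bound : exists C : int, 0 <= C /\
  forall y, O y -> vge (- C) (nrd y) /\ vge (- C) (trd y).
Proof.
have [D [D0 hD]] := coord_bound.
exists (D + D + `|v a| + `|v b|); split; first by lia.
move=> y hy; have h0 := hD y hy 0%N isT; have h1 := hD y hy 1%N isT.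
have h2 := hD y hy 2%N isT; have h3 := hD y hy 3%N isT.
split; last by rewrite trdE; apply: (geW _ (geD h0 h0)); lia.
rewrite nrdE; apply: geD; [apply: geB; [apply: geB|]|].
- by apply: (geW _ (geM h0 h0)); lia.
- by apply: (geW _ (geM (ge_v a) (geM h1 h1))); lia.
- by apply: (geW _ (geM (ge_v b) (geM h2 h2))); lia.
- have hab : vge (v a + v b) (a * b) by apply: geM; apply: ge_v.
  by apply: (geW _ (geM hab (geM h3 h3))); lia.
Qed.

Lemma v2 : (2 : F) != 0 /\ v 2 = 0.
Proof.
have h2 : vge 0 (2 : F) by rewrite -(addr0 0%R); apply: geD => //; apply: ge1.
exact: (unitP h2 (fun h => hnd h)).
Qed.

Fixpoint xp (x : A) m := if m is m'.+1 then qmul x (xp x m') else qone.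

Lemma O_xp x m : O x -> O (xp x m).
Proof. by move=> hx; elim: m => //= m IH; apply: OM. Qed.
Lemma nrd_xp x m : nrd (xp x m) = nrd x ^+ m.
Proof. elim: m => [|m IH] /=; first by rewrite nrd1 expr0. by rewrite nrdM IH exprS. Qed.
Lemma trd_xp x m : trd (xp x m.+2) = trd x * trd (xp x m.+1) - nrd x * trd (xp x m).
Proof.
rewrite /= qmulA qCH qmulBl !qmulZl qmul1l trdB !trdZ //.
Qed.

Lemma integral x : O x -> vge 0 (nrd x) /\ vge 0 (trd x).
Proof.
move=> hx; have [C [C0 hC]] := nt_bound.
set K := (absz C).+1.
have hm : vge 0 (nrd x).
  have [m0|m0] := eqVneq (nrd x) 0; first by left.
  have [h|h] := leP 0 (v (nrd x)); first by right.
  exfalso; have [h1 _] := hC _ (O_xp K hx); rewrite nrd_xp in h1.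
  case: h1 => [/eqP|h1]; first by rewrite expf_eq0 (negbTE m0) andbF.
  rewrite vX // in h1; nia.
split => //.
set t := trd x; set m := nrd x in hm *.
have [t0|t0] := eqVneq t 0; first by left.
have [h|h] := leP 0 (v t); first by right.
exfalso.
pose P j := trd (xp x j) != 0 /\ v (trd (xp x j)) = j%:Z * v t.
have hP : forall j, P j /\ P j.+1.
  elim=> [|j [[s0 e0] [s1 e1]]].
    split; last by split; rewrite /= qmul1r -/t //; lia.
    rewrite /P /= trd1; have [h20 h2] := v2; have h2p : v (1 + 1) = 0 := h2. by split => //; lia.
  split => //; rewrite /P trd_xp -/t -/m.
  have ts1 : t * trd (xp x j.+1) != 0 by rewrite mulf_neq0.
  have [->|m0] := eqVneq m 0.
    by rewrite mul0r subr0; split => //; rewrite vM // e1; lia.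
  have ms : - (m * trd (xp x j)) != 0 by rewrite oppr_eq0 mulf_neq0.
  have lt : v (t * trd (xp x j.+1)) < v (- (m * trd (xp x j))).
    rewrite vN (vM m0 s0) (vM t0 s1) e1 e0; case: hm => [/eqP|hm']; first by rewrite (negbTE m0).
    lia.
  have [ne ev] := strict ts1 ms lt; split => //.
  by rewrite ev vM // e1; lia.
have [[s0 e0] _] := hP K.
have [_ h1] := hC _ (O_xp K hx).
case: h1 => [/eqP|h1]; first by rewrite (negbTE s0).
rewrite e0 in h1; nia.
Qed.

Variables (k : nzRingType) (red : F -> k) (psi : A -> k).
Hypotheses
  (rD : forall x y, in_OF v x -> in_OF v y -> red (x + y) = red x + red y)
  (rM : forall x y, in_OF v x -> in_OF v y -> red (x * y) = red x * red y)
  (r1 : red 1 = 1) (rS : forall t, exists2 x, in_OF v x & red x = t)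
  (rK : forall x, in_OF v x -> (red x = 0 <-> in_pF v x)).
Hypotheses
  (pD : forall x y, O x -> O y -> psi (x + y) = psi x + psi y)
  (pM : forall x y, O x -> O y -> psi (qmul x y) = psi x * psi y)
  (p1 : psi qone = 1) (pS : forall t, exists2 x, O x & psi x = t)
  (pK : forall x, O x -> (psi x = 0 <-> jacobson a b O x)).
Variables (pi : F).
Hypotheses (pi0 : pi != 0) (vpi : v pi = 1).

Lemma psi0 : psi 0 = 0.
Proof. have h := pD O0 O0; rewrite addr0 in h; apply: (addrI (psi 0)); by rewrite -h addr0. Qed.
Lemma psiB x y : O x -> O y -> psi (x - y) = psi x - psi y.
Proof. by move=> hx hy; rewrite -{2}(subrK y x) (pD (OB hx hy) hy) addrK. Qed.
Lemma psi_inv x y : O x -> O y -> qmul x y = qone -> psi x != 0.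
Proof.
move=> hx hy e; apply/eqP => h; have := pM hx hy; rewrite e p1 h mul0r.
by move/eqP; rewrite oner_eq0.
Qed.
Lemma psi_unit c : vge 0 c -> ~ vge 1 c -> psi (c *: qone) != 0.
Proof.
move=> h0 h1; have [c0 vc] := unitP h0 h1.
apply: (psi_inv (y := c^-1 *: qone)); [exact: OS | exact: OS (unit_inv c0 vc) |].
by rewrite qmulSS mulfV // scale1r.
Qed.
Lemma vge0pi : vge 0 pi. Proof. by right; rewrite vpi. Qed.
Lemma vge1pi : vge 1 pi. Proof. by right; rewrite vpi. Qed.

Lemma Bm j : O j -> psi j = 0 -> vge 1 (nrd j).
Proof.
move=> hj pj; have [hm ht] := integral hj.
case: (pselect (vge 1 (nrd j))) => // h1; exfalso.
have [m0 vm] := unitP hm h1.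
set y := (nrd j)^-1 *: (trd j *: qone - j).
have hy : O y by apply: OZ; [exact: unit_inv | apply: OB => //; exact: OS].
have : psi j != 0.
  apply: (psi_inv hj hy); by rewrite /y qmulZr qinv scalerA mulVf // scale1r.
by rewrite pj eqxx.
Qed.

Lemma Epi : psi (pi *: qone) = 0.
Proof.
have [//|ne] := eqVneq (psi (pi *: qone)) 0; exfalso.
have [c0 hc0 e] := rS (psi (pi *: qone)).
have nc : ~ vge 1 c0 by move=> h; move: ne; rewrite -e (proj2 (rK hc0) h) eqxx.
have [c00 vc] := unitP hc0 nc.
have [y hy ey] := pS (red c0^-1).
have hpy : psi (pi *: y) = 1.
  rewrite -qmulS pM //; last exact: OS vge0pi.
  by rewrite -e ey -rM //; [rewrite mulfV // r1 | exact: unit_inv].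
set z := (-1) *: qone + pi *: y.
have hN1 : vge 0 (-1 : F) by apply: geN; exact: ge1.
have hz : O z by apply: OD; [exact: OS | apply: OZ => //; exact: vge0pi].
have pz : psi z = 0.
  rewrite /z pD //; [|exact: OS|apply: OZ => //; exact: vge0pi].
  have hm1 : psi ((-1) *: qone) = -1.
    have := pD O1 (OS hN1); rewrite scaleN1r subrr psi0 p1 => /esym.
    by rewrite addrC => /eqP; rewrite addr_eq0 => /eqP.
  by rewrite hm1 hpy addNr.
have := Bm hz pz; rewrite /z nrdS trdZ nrdZ => h.
have [hn ht] := integral hy.
apply: not_ge1_1.
have -> : (1 : F) = ((-1) ^+ 2 + -1 * (pi * trd y) + pi ^+ 2 * nrd y) + pi * trd y - pi ^+ 2 * nrd y by ring.
apply: geB; first apply: geD => //.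
  by have := geM vge1pi ht; rewrite addr0.
by apply: (geW _ (geM (geM vge1pi vge1pi) hn)).
Qed.

Lemma E c : vge 1 c -> psi (c *: qone) = 0.
Proof.
case=> [->|h]; first by rewrite scale0r psi0.
have [->|c0] := eqVneq c 0; first by rewrite scale0r psi0.
have hq : vge 0 (c / pi) by right; rewrite vM ?invr_eq0 // vV // vpi; lia.
have -> : c *: qone = qmul (pi *: qone) ((c / pi) *: qone) by rewrite qmulSS mulrC divfK.
by rewrite pM ?Epi ?mul0r //; apply: OS => //; exact: vge0pi.
Qed.

Variables (r : seq F).
Hypotheses (hr1 : forall y, y \in r -> in_OF v y)
  (hr2 : forall x, in_OF v x -> exists2 y, y \in r & in_pF v (x - y)).

Local Notation T := {ffun 'I_n -> seq_sub r}.
Definition rep (f : T) : A := \sum_i (ssval (f i)) *: g i.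

Lemma O_rep f : O (rep f).
Proof. by apply/hO; exists (fun i => ssval (f i)); split => // i; apply: hr1; exact: ssvalP. Qed.

Lemma div_pi d : vge 1 d -> vge 0 (d / pi).
Proof.
case=> [->|h]; first by rewrite mul0r; left.
have [->|d0] := eqVneq d 0; first by rewrite mul0r; left.
by right; rewrite vM ?invr_eq0 // vV // vpi; lia.
Qed.

Lemma rep_cover x : O x -> exists f z, O z /\ x = rep f + pi *: z.
Proof.
move=> /hO[c [hc ->]].
have : forall i, exists y : seq_sub r, vge 1 (c i - ssval y).
  by move=> i; have [y yr hy] := hr2 (hc i); exists (SeqSub yr).
case/fin_all_exists => f0 hf0.
exists [ffun i => f0 i], (\sum_i ((c i - ssval (f0 i)) / pi) *: g i); split.
  by apply/hO; exists (fun i => (c i - ssval (f0 i)) / pi); split => // i; apply: div_pi.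
rewrite /rep scaler_sumr -big_split; apply: eq_bigr => i _ /=.
by rewrite ffunE scalerA mulrC divfK // -scalerDl addrC subrK.
Qed.

Lemma li_one L : left_ideal a b O L -> L qone -> forall x, O x -> L x.
Proof. by case=> _ _ _ hm h1 x hx; rewrite -(qmul1r x); apply: hm. Qed.

Definition cnt (L : A -> Prop) := #|[set f : T | `[< L (rep f) >]]|.

Section Max.
Variable L0 : A -> Prop.
Hypotheses (hL0 : left_ideal a b O L0) (pL0 : forall z, O z -> L0 (pi *: z)) (nL0 : ~ L0 qone).

Lemma grow L : left_ideal a b O L -> (forall x, L0 x -> L x) -> ~ L qone ->
  ~ max_left_ideal a b O L ->
  exists L', [/\ left_ideal a b O L', (forall x, L0 x -> L' x), ~ L' qone & (cnt L < cnt L')%N].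
Proof.
move=> hL sL nL nmax.
case: (pselect (exists L', [/\ left_ideal a b O L', (forall x, L x -> L' x),
    ~ (forall x, L' x <-> L x) & ~ (forall x, L' x <-> O x)])); last first.
  move=> nex; exfalso; apply: nmax; split => //; first by exists qone.
  move=> L' hL' sL'.
  case: (pselect (forall x, L' x <-> L x)) => [|n1]; first by left.
  case: (pselect (forall x, L' x <-> O x)) => [|n2]; first by right.
  by exfalso; apply: nex; exists L'.
case=> L' [hL' sL' n1 n2].
have nL' : ~ L' qone.
  move=> h; apply: n2 => x; split; last exact: li_one.
  by case: hL' => h1 _ _ _; apply: h1.
case: (pselect (exists x, L' x /\ ~ L x)); last first.
  move=> nex; exfalso; apply: n1 => x; split => [h|]; last exact: sL'.
  by case: (pselect (L x)) => // nx; exfalso; apply: nex; exists x.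
case=> x [hx nx].
have Ox : O x by case: hL' => h1 _ _ _; apply: h1.
have [f [z [hz ez]]] := rep_cover Ox.
exists L'; split => //; first by move=> y /sL /sL'.
apply: proper_card; apply/properP; split.
  by apply/subsetP => f'; rewrite !inE => /asboolP h; apply/asboolP; apply: sL'.
exists f.
  rewrite inE; apply/asboolP.
  have -> : rep f = x - pi *: z by rewrite ez addrK.
  by case: hL' => _ _ hB _; apply: hB => //; apply: sL'; apply: sL; apply: pL0.
rewrite inE; apply/negP => /asboolP hf; apply: nx.
have -> : x = rep f - pi *: (- z) by rewrite ez scalerN opprK.
by case: hL => _ _ hB _; apply: hB => //; apply: sL; apply: pL0; apply: ON.
Qed.

Lemma exists_max : exists L, max_left_ideal a b O L /\ forall x, L0 x -> L x.
Proof.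
suff : forall m L, left_ideal a b O L -> (forall x, L0 x -> L x) -> ~ L qone ->
    (#|T| - cnt L <= m)%N -> exists L', max_left_ideal a b O L' /\ forall x, L0 x -> L' x.
  by move=> h; apply: (h #|T| L0 hL0 (fun x hx => hx) nL0 (leq_subr _ _)).
elim=> [|m IH] L hL sL nL hm.
  case: (pselect (max_left_ideal a b O L)) => [hmax|nmax]; first by exists L; split.
  have [L' [_ _ _ lt]] := grow hL sL nL nmax.
  have : (cnt L' <= #|T|)%N := max_card _.
  lia.
case: (pselect (max_left_ideal a b O L)) => [hmax|nmax]; first by exists L; split.
have [L' [hL' sL' nL' lt]] := grow hL sL nL nmax.
apply: (IH L') => //.
have : (cnt L' <= #|T|)%N := max_card _.
lia.
Qed.
End Max.

Lemma Bt j : O j -> psi j = 0 -> vge 1 (trd j).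
Proof.
move=> hj pj; have [hm ht] := integral hj; have m1 := Bm hj pj.
case: (pselect (vge 1 (trd j))) => // nt; exfalso.
have [t0 vt] := unitP ht nt.
set t := trd j in ht nt t0 vt *; set m := nrd j in hm m1 *.
set w := j - t *: qone.
have Ow : O w by apply: OB hj (OS ht).
have wj : qmul w j = (- m) *: qone.
  by rewrite /w qmulBl qCH qmulS -/t -/m addrAC subrr add0r scaleNr.
pose L0 := fun x => exists y z, [/\ O y, O z & x = qmul y w + pi *: z].
have hL0 : left_ideal a b O L0.
  split.
  - by move=> x [y [z [hy hz ->]]]; apply: OD (OM hy Ow) (OZ vge0pi hz).
  - by exists 0, 0; rewrite qmul0l scaler0 addr0; split => //; exact: O0.
  - move=> x1 x2 [y1 [z1 [hy1 hz1 ->]]] [y2 [z2 [hy2 hz2 ->]]].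
    exists (y1 - y2), (z1 - z2); split; [exact: OB | exact: OB |].
    by rewrite qmulBl scalerBr opprD addrACA.
  - move=> r0 x hr0 [y [z [hy hz ->]]]; exists (qmul r0 y), (qmul r0 z); split; [exact: OM | exact: OM |].
    by rewrite qmulDr qmulA qmulZr.
have pL0 : forall z, O z -> L0 (pi *: z).
  by move=> z hz; exists 0, z; rewrite qmul0l add0r; split => //; exact: O0.
have nL0 : ~ L0 qone.
  case=> y [z [hy hz e]]; apply: nt.
  have e2 : pi * (m / pi) = m by rewrite mulrC divfK.
  set j2 := (- (m / pi)) *: y + qmul z j.
  have hj2 : O j2 by apply: OD; [apply: OZ => //; apply: geN; exact: div_pi | exact: OM].
  have ej : j = pi *: j2.
    rewrite -{1}(qmul1l j) e qmulDl -qmulA wj qmulZr qmul1r qmulZl.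
    by rewrite /j2 scalerDr scalerA mulrN e2.
  rewrite /t ej trdZ; have [_ ht2] := integral hj2.
  by have := geM vge1pi ht2; rewrite addr0.
have [L [hmax sL]] := exists_max hL0 pL0 nL0.
have Lj : L j by have [_ hJ] := (proj1 (pK hj) pj); apply: hJ.
have Lw : L w by apply: sL; exists qone, 0; rewrite qmul1l scaler0 addr0; split => //; exact: O0.
case: hmax => hL [x0 [hx0 nx0]] _.
case: (hL) => _ _ hB hML.
have Lt : L (t *: qone) by have := hB _ _ Lj Lw; rewrite /w opprB addrC subrK.
have Lone : L qone.
  have := hML _ _ (OS (unit_inv t0 vt)) Lt.
  by rewrite qmulSS mulVf // scale1r.
by apply: nx0; apply: li_one.
Qed.

Lemma lift x : O x -> exists l, vge 0 l /\ psi x = psi (l *: qone).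
Proof.
move=> hx.
have hp : forall kk : k, exists c, vge 0 c /\ red c = kk.
  by move=> kk; have [c hc e] := rS kk; exists c.
have [pre hpre] := choice hp.
pose sg kk := psi (pre kk *: qone).
have inj : injective sg.
  move=> k1 k2; rewrite /sg => e.
  have [h1 e1] := hpre k1; have [h2 e2] := hpre k2.
  have d0 : psi ((pre k1 - pre k2) *: qone) = 0.
    by rewrite scalerBl psiB ?e ?subrr //; apply: OS.
  have d1 : vge 1 (pre k1 - pre k2).
    case: (pselect (vge 1 (pre k1 - pre k2))) => // nd; exfalso.
    by move: (psi_unit (geB h1 h2) nd); rewrite d0 eqxx.
  have rd : red (pre k1 - pre k2) = 0 by apply/(rK (geB h1 h2)).
  rewrite -e1 -e2 -(subrK (pre k2) (pre k1)) rD ?rd ?add0r //; exact: geB.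
have cov : forall kk, kk \in map red r.
  move=> kk; have [c hc e] := rS kk; have [y yr hy] := hr2 hc.
  have hy0 : vge 0 y by apply: hr1.
  have -> : kk = red y.
    rewrite -e -(subrK y c) rD ?(proj2 (rK (geB hc hy0)) hy) ?add0r //; exact: geB.
  exact: map_f.
set s := undup (map red r).
have us : uniq s by apply: undup_uniq.
have u2 : uniq (map sg s) by rewrite map_inj_uniq.
have sub : {subset map sg s <= s} by move=> y _; rewrite mem_undup cov.
have sz : (size s <= size (map sg s))%N by rewrite size_map.
have [_ eq] := uniq_min_size u2 sub sz.
have : psi x \in map sg s by rewrite eq mem_undup cov.
case/mapP => kk _ e; exists (pre kk); split => //; by case: (hpre kk).
Qed.

Hypothesis hc : v_complete v.

Lemma main t : (exists x, order_unit a b O x /\ nrd x = t) <->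
    (exists u, OF_unit v u /\ t = u ^+ 2).
Proof.
split.
  case=> x [[hx [y [hy [exy eyx]]]] <-].
  have [l [hl ex]] := lift hx.
  have nl : ~ vge 1 l.
    by move=> h; move: (psi_inv hx hy exy); rewrite ex E // eqxx.
  have [l0 vl] := unitP hl nl.
  have li := unit_inv l0 vl.
  set j := l^-1 *: x - qone.
  have hj : O j by apply: OB => //; apply: OZ.
  have pj : psi j = 0.
    rewrite psiB //; last by apply: OZ.
    rewrite -qmulS pM //; last by apply: OS.
    by rewrite ex -pM ?qmulSS ?mulVf ?scale1r ?subrr //; apply: OS.
  have h1 := Bt hj pj; have h2 := Bm hj pj.
  have ex2 : x = l *: (1 *: qone + j) by rewrite scale1r /j addrC subrK scalerA mulfV // scale1r.
  have hw : vge 1 ((1 ^+ 2 + 1 * trd j + nrd j) - 1).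
    have -> : (1 ^+ 2 + 1 * trd j + nrd j) - 1 = trd j + nrd j by ring.
    by apply: geD.
  have [s [hs es]] := hensel hv hc hnd hw.
  have [s0 vs] := unit_plus hs.
  exists (l * s); split.
    by split; [rewrite mulf_neq0 | rewrite vM // vl vs].
  by rewrite ex2 nrdZ nrdS -es exprMn.
case=> u [[u0 vu] ->]; exists (u *: qone); split; last by rewrite nrdZ nrd1 mulr1.
split; first by apply: OS; apply: unit_ge.
exists (u^-1 *: qone); split; first by apply: OS; apply: unit_inv.
by rewrite !qmulSS mulfV // mulVf // scale1r.
Qed.

End M.

Unset Implicit Arguments.


Theorem lemma3p4 (F : fieldType) (v : F -> int) (a b : F)
    (O : 'rV[F]_4 -> Prop) :
  nonarch_local_field v -> nondyadic v -> a != 0 -> b != 0 ->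
  is_order a b v O -> Bass a b v O -> eichler_zero a b v O ->
  forall t : F,
    (exists x, order_unit a b O x /\ nrd a b x = t) <->
    (exists u, OF_unit v u /\ t = u ^+ 2).
Proof.
move=> [hv hc [r [hr1 hr2]]] hnd a0 b0 [[n [g [hO _]]] O1 OM] _
  [_ [k [red [psi [[rD rM r1 rS rK] [pD pM p1 pS pK]]]]]] t.
have [_ _ [pi [pi0 vpi]]] := hv.
exact: (main hv hnd a0 b0 hO O1 OM rD rM r1 rS rK pD pM p1 pS pK pi0 vpi hr1 hr2 hc).
Qed.
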